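(* Let $1\le k\le N$ and let $\mathscr{K}$ be a collection of compact subsets of $\mathbb{C}^N$ totally ordered by inclusion, and let $K_\infty=\bigcap_{K\in\mathscr{K}}K$. Then $\widehat{K_\infty}^{\,k}=\bigcap_{K\in\mathscr{K}}\widehat{K}^{\,k}$ and $h_r^k(K_\infty)=\bigcap_{K\in\mathscr{K}}h_r^k(K)$.
   Context: Let $X\subset\mathbb{C}^N$ be compact. An analytic subvariety of $\mathbb{C}^N$ of pure codimension $m$ means a pure-dimensional analytic subvariety of $\mathbb{C}^N$ of dimension $N-m$. The polynomial hull is $\widehat{X}=\{z: |p(z)|\le\max_X|p| \text{ for all polynomials } p\}$. For $1\le k\le N$, the $k$-rational hull $h_r^k(X)$ is the set of $z\in\mathbb{C}^N$ such that every analytic subvariety of $\mathbb{C}^N$ of pure codimension $\le k$ that passes through $z$ intersects $X$. The $1$-polynomial hull is $\widehat{X}^{\,1}=\widehat{X}$; for $2\le k\le N$ the $k$-polynomial hull $\widehat{X}^{\,k}$ is the set of $z\in\mathbb{C}^N$ such that $z\in h_r^{k-1}(X)$ and $z\in\widehat{X\cap V}$ for every analytic subvariety $V$ of $\mathbb{C}^N$ of pure codimension $\le k-1$ passing through $z$. *)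

(* Defs.v *)
(* C = R[i] (complex numbers over an
   arbitrary realType R, from mathcomp-real-closed), C^N = 'rV[R[i]]_N with its
   normed-space topology over R[i] (sup norm = Euclidean topology). *)
From HB Require Import structures.
From mathcomp Require Import all_boot all_order all_algebra.
From mathcomp Require Import all_classical all_reals all_analysis.
From mathcomp Require Import complex.
From mathcomp Require mpoly.
Import numFieldNormedType.Exports.
Import Order.TTheory GRing.Theory Num.Theory.

Set Implicit Arguments.
Unset Strict Implicit.
Unset Printing Implicit Defensive.

Local Open Scope ring_scope.
Local Open Scope classical_set_scope.

Definition CN (R : realType) (N : nat) : normedModType R[i] := 'rV[R[i]]_N.

Section Defs.
Variables (R : realType) (N : nat).
Local Notation V := (CN R N).

Definition poly_eval (p : mpoly.mpoly N R[i]) (z : V) : R[i] :=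
  mpoly.meval (fun j => z ord0 j) p.

(* polynomial hull: |p(z)| <= max_X |p| for every polynomial p
   (written as: every bound c of |p| on X bounds |p(z)|). *)
Definition poly_hull (X : set V) : set V :=
  [set z | forall (p : mpoly.mpoly N R[i]) (c : R[i]),
     (forall x, X x -> `|poly_eval p x| <= c) -> `|poly_eval p z| <= c].

(* g : C^N -> C^m is holomorphic on U: complex (R[i]-linear) Frechet
   differentiable at every point of U. *)
Definition holomorphic_on (m : nat) (U : set V) (g : V -> CN R m) : Prop :=
  forall z, U z -> differentiable g z.

Definition analytic_set (A : set V) : Prop :=
  forall a : V, exists (U : set V) (m : nat) (g : V -> CN R m),
    [/\ open U, U a, holomorphic_on U g &
        A `&` U = [set z | U z /\ g z = 0]].

(* a is a regular point of A at which A is a complex submanifold of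
   codimension c (dimension N - c): near a, A is the zero set of c holomorphic
   functions with C-linearly independent differentials. *)
Definition regular_point_codim (A : set V) (c : nat) (a : V) : Prop :=
  A a /\ exists (U : set V) (g : V -> CN R c),
    [/\ open U, U a, holomorphic_on U g,
        (forall z, U z -> forall w : CN R c, exists v : V, 'd g z v = w) &
        A `&` U = [set z | U z /\ g z = 0]].

(* dim_a A = N - m, where dim_a A = limsup_{z -> a, z in reg A} dim_z A. *)
Definition local_codim (A : set V) (a : V) (m : nat) : Prop :=
  (forall W, nbhs a W -> exists z, W z /\ regular_point_codim A m z) /\
  (exists W, nbhs a W /\
     forall z c, W z -> regular_point_codim A c z -> (m <= c)%N).

Definition pure_codim_subvariety (A : set V) (m : nat) : Prop :=
  [/\ (m <= N)%N, analytic_set A & forall a, A a -> local_codim A a m].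

Definition rat_hull (k : nat) (X : set V) : set V :=
  [set z | forall (A : set V) (m : nat), (m <= k)%N ->
     pure_codim_subvariety A m -> A z -> A `&` X !=set0].

Definition k_poly_hull (k : nat) (X : set V) : set V :=
  if (k <= 1)%N then poly_hull X else
  [set z | rat_hull k.-1 X z /\
     forall (A : set V) (m : nat), (m <= k.-1)%N ->
       pure_codim_subvariety A m -> A z -> poly_hull (X `&` A) z].

End Defs.

Arguments poly_eval {R N}.
Arguments poly_hull {R N}.
Arguments holomorphic_on {R N m}.
Arguments analytic_set {R N}.
Arguments regular_point_codim {R N}.
Arguments local_codim {R N}.
Arguments pure_codim_subvariety {R N}.
Arguments rat_hull {R N}.
Arguments k_poly_hull {R N}.

(* Main.v *)
Require Import Defs.
From HB Require Import structures.
From mathcomp Require Import all_boot all_order all_algebra.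
From mathcomp Require Import all_classical all_reals all_analysis.
From mathcomp Require Import complex.
From mathcomp Require mpoly.
Import numFieldNormedType.Exports numFieldTopology.Exports.
Import Order.TTheory GRing.Theory Num.Theory.
Local Open Scope classical_set_scope.
Local Open Scope ring_scope.

Section Cont.
Variables (K : numFieldType) (n : nat).
Local Notation V := 'rV[K]_n.

Lemma sum_cont (I : Type) (s : seq I) (F : I -> V -> K) :
  (forall i, continuous (F i)) -> continuous (fun x => \sum_(i <- s) F i x).
Proof.
move=> hF; elim: s => [|a s IH].
  under eq_fun do rewrite big_nil. exact: cst_continuous.
under eq_fun do rewrite big_cons.
by move=> x; apply: continuousD; [apply: hF | apply: IH].
Qed.

Lemma prod_cont (I : Type) (s : seq I) (F : I -> V -> K) :
  (forall i, continuous (F i)) -> continuous (fun x => \prod_(i <- s) F i x).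
Proof.
move=> hF; elim: s => [|a s IH].
  under eq_fun do rewrite big_nil. exact: cst_continuous.
under eq_fun do rewrite big_cons.
by move=> x; apply: (@continuousM K _ (F a) (fun x => \prod_(j <- s) F j x) x); [apply: hF | apply: IH].
Qed.

Lemma expn_cont (f : V -> K) (k : nat) :
  continuous f -> continuous (fun x => f x ^+ k).
Proof.
move=> hf; elim: k => [|k IH].
  under eq_fun do rewrite expr0. exact: cst_continuous.
under eq_fun do rewrite exprS.
by move=> x; apply: (@continuousM K _ f (fun x => f x ^+ k) x); [apply: hf | apply: IH].
Qed.

Lemma meval_cont (p : mpoly.mpoly n K) :
  continuous (fun x : V => mpoly.meval (fun j => x ord0 j) p).
Proof.
under eq_fun do rewrite mpoly.mevalE.
apply: sum_cont => m x; apply: continuousM; first exact: cst_continuous.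
apply: prod_cont => j; apply: expn_cont.
exact: (@coord_continuous K 1 n ord0 j).
Qed.

Lemma open_meval_lt (p : mpoly.mpoly n K) (c : K) :
  open [set x : V | `|mpoly.meval (fun j => x ord0 j) p| < c].
Proof.
rewrite openE => x0 /= hx.
set f := fun x : V => mpoly.meval (fun j => x ord0 j) p.
have e0 : 0 < c - `|f x0| by rewrite subr_gt0.
have := @cvgr_dist_lt _ _ _ _ _ f (f x0) (meval_cont p x0) _ e0.
move=> H; apply: (filterS _ (H _)) => t /= ht.
rewrite -/(f t). have -> : f t = f x0 - (f x0 - f t) by rewrite opprB addrCA subrr addr0.
apply: (le_lt_trans (ler_normB (f x0) (f x0 - f t))).
have := ltrD2l (`|f x0|) (`|f x0 - f t|) (c - `|f x0|).
rewrite ht addrCA subrr addr0 => h; by rewrite h.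
Qed.
End Cont.
Lemma chain_meet {R : realType} {N : nat} {Kc : set (set (CN R N))} {C : set (CN R N)} :
  (forall K, Kc K -> compact K) ->
  (forall K1 K2, Kc K1 -> Kc K2 -> K1 `<=` K2 \/ K2 `<=` K1) ->
  closed C -> (exists K0, Kc K0) ->
  (forall K, Kc K -> C `&` K !=set0) -> C `&` \bigcap_(K in Kc) K !=set0.
Proof.
move=> cpt chain clC [K0 K00] ne.
have FF : Filter (filter_from Kc (fun K => C `&` K)).
  apply: filter_from_filter; first by exists K0.
  move=> i j Di Dj; case: (chain i j Di Dj) => sij.
    by exists i => // x [Cx ix]; split; split => //; apply: sij.
  by exists j => // x [Cx jx]; split; split => //; apply: sij.
have PF : ProperFilter (filter_from Kc (fun K => C `&` K)).
  by apply: filter_from_proper => i Di; apply: ne.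
have FK0 : filter_from Kc (fun K => C `&` K) K0 by exists K0 => //; apply: subIsetr.
have [p [K0p clp]] := cpt K0 K00 _ PF FK0.
have H : forall K, Kc K -> (C `&` K) p.
  move=> K KK; have : closed (C `&` K).
    by apply: closedI => //; apply: compact_closed; [exact: norm_hausdorff| exact: cpt].
  move/closure_id => ->; move=> B Bp.
  have FK : filter_from Kc (fun K => C `&` K) (C `&` K) by exists K.
  have := clp (C `&` K) B FK Bp.
  by case=> x [? ?]; exists x.
exists p; split; first by case: (H K0 K00).
by move=> K KK; case: (H K KK).
Qed.
Lemma analytic_closed {R : realType} {N : nat} {A : set (CN R N)} :
  analytic_set A -> closed A.
Proof.
move=> an a cla; apply: contrapT => nAa.
have [U [m [g [oU Ua hg eqA]]]] := an a.
have ga : g a != 0.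
  apply/eqP => ga0; apply: nAa.
  have : (A `&` U) a by rewrite eqA.
  by case.
have cg := differentiable_continuous (hg a Ua).
have nb : nbhs a (U `&` [set z | g z != 0]).
  apply: filterI; first exact: open_nbhs_nbhs.
  have ga0 : 0 < `|g a| by rewrite normr_gt0.
  have := @cvgr_dist_lt _ _ _ _ _ g (g a) cg _ ga0.
  move=> H; apply: (filterS _ (H _)) => z /= hz; apply/eqP => gz0.
  by move: hz; rewrite gz0 subr0 ltxx.
have [x [Ax [Ux gx]]] := cla _ nb.
have : (A `&` U) x by [].
by rewrite eqA => -[_ /eqP]; rewrite (negbTE gx).
Qed.

Section Main.
Context {R : realType} {N : nat}.
Local Notation V := (CN R N).

Lemma poly_hull_mono (X Y : set V) : X `<=` Y -> poly_hull X `<=` poly_hull Y.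
Proof. by move=> XY z hz p c hc; apply: hz => x Xx; apply: hc; apply: XY. Qed.

Lemma rat_hull_mono k (X Y : set V) : X `<=` Y -> rat_hull k X `<=` rat_hull k Y.
Proof.
move=> XY z hz A m hm hA Az; have [x [Ax Xx]] := hz A m hm hA Az.
by exists x; split => //; apply: XY.
Qed.


Lemma rat_chain k (Kc : set (set V)) :
  (forall K, Kc K -> compact K) ->
  (forall K1 K2, Kc K1 -> Kc K2 -> K1 `<=` K2 \/ K2 `<=` K1) ->
  rat_hull k (\bigcap_(K in Kc) K) = \bigcap_(K in Kc) rat_hull k K.
Proof.
move=> cpt chain; apply/seteqP; split.
  move=> z hz K KK; have sub : \bigcap_(K in Kc) K `<=` K.
    by move=> x hx; exact: hx K KK.
  exact: (@rat_hull_mono k _ _ sub z hz).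
move=> z hz A m hm hA Az.
case: (pselect (exists K0, Kc K0)) => [ne|e].
  have [_ an _] := hA.
  exact: (chain_meet cpt chain (analytic_closed an) ne
            (fun K KK => hz K KK A m hm hA Az)).
by exists z; split => // K KK; exfalso; apply: e; exists K.
Qed.

Lemma poly_chain (Kc : set (set V)) (C : set V) (z : V) :
  (forall K, Kc K -> compact K) ->
  (forall K1 K2, Kc K1 -> Kc K2 -> K1 `<=` K2 \/ K2 `<=` K1) ->
  closed C -> C z -> (forall K, Kc K -> poly_hull (K `&` C) z) ->
  poly_hull ((\bigcap_(K in Kc) K) `&` C) z.
Proof.
move=> cpt chain clC Cz hz p c hc.
case: (pselect (exists K0, Kc K0)) => [ne|e]; last first.
  by apply: hc; split => // K KK; exfalso; apply: e; exists K.
case: (pselect ((\bigcap_(K in Kc) K) `&` C !=set0)) => [[x0 [Ix0 Cx0]] | emp]; last first.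
  have : ~ (forall K, Kc K -> C `&` K !=set0).
    move=> h; apply: emp; have [y [Cy Iy]] := chain_meet cpt chain clC ne h.
    by exists y.
  move=> /existsNP [K /not_implyP [KK nK]].
  by apply: (hz K KK) => x [Kx Cx]; exfalso; apply: nK; exists x.
have c0 : 0 <= c := le_trans (normr_ge0 _) (hc x0 (conj Ix0 Cx0)).
apply: contrapT => nz.
have lt : c < `|poly_eval p z|.
  by rewrite real_ltNge ?ger0_real //; apply/negP.
case: (midf_lt lt) => lt1 lt2.
move: lt1 lt2; set c' := (X in c < X) => lt1 lt2.
pose O := [set x : V | `|poly_eval p x| < c'].
have oO : open O := @open_meval_lt _ _ p c'.
have clD : closed (C `&` ~` O) by apply: closedI => //; rewrite closedC.
have : ~ (forall K, Kc K -> (C `&` ~` O) `&` K !=set0).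
  move=> h; have [y [[Cy nOy] Iy]] := chain_meet cpt chain clD ne h.
  by apply: nOy; rewrite /O /=; apply: le_lt_trans lt1; apply: hc; split.
move=> /existsNP [K /not_implyP [KK nK]].
have : `|poly_eval p z| <= c'.
  apply: (hz K KK) => x [Kx Cx]; apply: ltW; apply: contrapT => nOx.
  by apply: nK; exists x.
by move=> /le_gtF; rewrite lt2.
Qed.

End Main.

Theorem lemma4p1 (R : realType) (N k : nat) (Kc : set (set (CN R N))) :
  (1 <= k <= N)%N ->
  (forall K, Kc K -> compact K) ->
  (forall K1 K2, Kc K1 -> Kc K2 -> K1 `<=` K2 \/ K2 `<=` K1) ->
  k_poly_hull k (\bigcap_(K in Kc) K) = \bigcap_(K in Kc) k_poly_hull k K /\
  rat_hull k (\bigcap_(K in Kc) K) = \bigcap_(K in Kc) rat_hull k K.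
Proof.
move=> _ cpt chain; split; last exact: rat_chain.
have sub : forall K, Kc K -> \bigcap_(K in Kc) K `<=` K.
  by move=> K KK x hx; exact: hx K KK.
rewrite /k_poly_hull; case: ifP => _.
  apply/seteqP; split.
    by move=> z hz K KK; exact: (@poly_hull_mono _ _ _ _ (sub K KK) z hz).
  move=> z hz.
  have := @poly_chain R N Kc setT z cpt chain closedT I.
  rewrite setIT; apply => K KK; rewrite setIT; exact: hz K KK.
apply/seteqP; split.
  move=> z [hr hp] K KK; split; first exact: (@rat_hull_mono _ _ _ _ _ (sub K KK) z hr).
  move=> A m hm hA Az; apply: (@poly_hull_mono _ _ _ _ _ z (hp A m hm hA Az)).
  by apply: setSI; exact: sub.
move=> z hz; split.
  by rewrite rat_chain // => K KK; exact: (hz K KK).1.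
move=> A m hm hA Az; apply: poly_chain => //.
  by case: hA => _ an _; exact: analytic_closed.
by move=> K KK; exact: (hz K KK).2 A m hm hA Az.
Qed.
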